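(* Let $\mathcal C$ be an additive category and let $\mathcal F$, $\mathcal G$ and $\bar\cdot$ be additive endofunctors of $\mathcal C$, where $\bar\cdot$ is the identity on objects and an involution on morphisms. Let $f$ be a natural transformation from $\mathcal F$ to $\mathcal G$, and let $\partial:\mathrm{Hom}_{\mathcal C}(A,B)\to\mathrm{Hom}_{\mathcal C}(\mathcal G A,\mathcal F B)$ be an operation on Hom-sets such that: (1) $\partial$ is $\mathbb{Z}$-linear: $\partial(\phi-\psi)=\partial\phi-\partial\psi$ for $\phi,\psi\in\mathrm{Hom}(A,B)$; (2) for $\phi\in\mathrm{Hom}(A,B)$: $\mathcal G(\phi-\bar\phi)=f_B\,\partial\phi$ and $\mathcal F(\phi-\bar\phi)=\partial\phi\,f_A$; (3) for composable $\phi\in\mathrm{Hom}(A,B)$, $\psi\in\mathrm{Hom}(B,C)$: $\partial(\psi\phi)=\partial\psi\,\mathcal G\phi+\mathcal F\bar\psi\,\partial\phi=\partial\psi\,\mathcal G\bar\phi+\mathcal F\psi\,\partial\phi$. Let $C$ be a chain complex over $\mathcal C$ with differential $d$; then $f$ gives a chain map $f_C:\mathcal F C\to\mathcal G C$. Let $\bar C$ be the chain complex obtained by applying $\bar\cdot$ to the differential of $C$ (same objects). Then the mapping cones $\mathrm{Cone}(f_C)$ and $\mathrm{Cone}(f_{\bar C})$ are isomorphic chain complexes.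
   Context: Convention for mapping cones: for a chain map $g:X\to Y$ (differentials of degree $+1$), $\mathrm{Cone}(g)=X[-1]\oplus Y$ with differential $\begin{pmatrix} d_X & 0\\ g\,\varepsilon_X & d_Y\end{pmatrix}$, where $\varepsilon_X$ is the identity in even homological degrees and minus the identity in odd degrees. *)

(* Defs.v *)
From mathcomp Require Import all_boot all_algebra.
Set Implicit Arguments. Unset Strict Implicit. Unset Printing Implicit Defensive.
Import GRing.Theory.
Local Open Scope ring_scope.

Record addCat := AddCat {
  Obj : Type;
  Mor : Obj -> Obj -> zmodType;
  idm : forall A, Mor A A;
  mcomp : forall A B C, Mor B C -> Mor A B -> Mor A C;
  compA : forall A B C D (h : Mor C D) (g : Mor B C) (f : Mor A B),
      mcomp h (mcomp g f) = mcomp (mcomp h g) f;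
  comp1m : forall A B (f : Mor A B), mcomp (idm B) f = f;
  compm1 : forall A B (f : Mor A B), mcomp f (idm A) = f;
  compBl : forall A B C (g g' : Mor B C) (f : Mor A B),
      mcomp (g - g') f = mcomp g f - mcomp g' f;
  compBr : forall A B C (g : Mor B C) (f f' : Mor A B),
      mcomp g (f - f') = mcomp g f - mcomp g f';
  zobj : Obj;
  zobj_id : idm zobj = 0;
  bip : Obj -> Obj -> Obj;
  bip_inl : forall A B, Mor A (bip A B);
  bip_inr : forall A B, Mor B (bip A B);
  bip_pl : forall A B, Mor (bip A B) A;
  bip_pr : forall A B, Mor (bip A B) B;
  bip_plinl : forall A B, mcomp (bip_pl A B) (bip_inl A B) = idm A;
  bip_prinr : forall A B, mcomp (bip_pr A B) (bip_inr A B) = idm B;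
  bip_plinr : forall A B, mcomp (bip_pl A B) (bip_inr A B) = 0;
  bip_prinl : forall A B, mcomp (bip_pr A B) (bip_inl A B) = 0;
  bip_sum : forall A B, mcomp (bip_inl A B) (bip_pl A B)
                        + mcomp (bip_inr A B) (bip_pr A B) = idm (bip A B)
}.

Arguments mcomp {_ A B C}.
Arguments idm {_}.
Arguments Mor : clear implicits.
Arguments bip : clear implicits.

Record addFunctor (C : addCat) := AddFunctor {
  FO : Obj C -> Obj C;
  FM : forall A B, Mor C A B -> Mor C (FO A) (FO B);
  FM_id : forall A, FM (idm A) = idm (FO A);
  FM_comp : forall A B D (g : Mor C B D) (f : Mor C A B),
      FM (mcomp g f) = mcomp (FM g) (FM f);
  FM_add : forall A B (f g : Mor C A B), FM (f - g) = FM f - FM g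
}.

Record addInvolution (C : addCat) := AddInvolution {
  bar : forall A B, Mor C A B -> Mor C A B;
  bar_id : forall A, bar (idm A) = idm A;
  bar_comp : forall A B D (g : Mor C B D) (f : Mor C A B),
      bar (mcomp g f) = mcomp (bar g) (bar f);
  bar_add : forall A B (f g : Mor C A B), bar (f - g) = bar f - bar g;
  bar_invol : forall A B (f : Mor C A B), bar (bar f) = f
}.

(* Cochain data indexed by int, differential of degree +1. *)
Record precomplex (C : addCat) := Precomplex {
  cobj : int -> Obj C;
  cdiff : forall n : int, Mor C (cobj n) (cobj (n + 1))
}.

Definition is_complex (C : addCat) (X : precomplex C) : Prop :=
  forall n : int, mcomp (cdiff X (n + 1)) (cdiff X n) = 0.

Definition is_chain_map (C : addCat) (X Y : precomplex C)
  (m : forall n, Mor C (cobj X n) (cobj Y n)) : Prop :=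
  forall n : int, mcomp (cdiff Y n) (m n) = mcomp (m (n + 1)) (cdiff X n).

Definition complex_iso (C : addCat) (X Y : precomplex C) : Prop :=
  exists (u : forall n, Mor C (cobj X n) (cobj Y n))
         (v : forall n, Mor C (cobj Y n) (cobj X n)),
    [/\ is_chain_map u, is_chain_map v,
        forall n, mcomp (v n) (u n) = idm (cobj X n)
      & forall n, mcomp (u n) (v n) = idm (cobj Y n)].

Definition Fcomplex (C : addCat) (F : addFunctor C) (X : precomplex C) :
  precomplex C :=
  @Precomplex C (fun n => FO F (cobj X n)) (fun n => FM F (cdiff X n)).

Definition barcomplex (C : addCat) (b : addInvolution C) (X : precomplex C) :
  precomplex C :=
  @Precomplex C (cobj X) (fun n => bar b (cdiff X n)).

Definition eps_at (C : addCat) (A B : Obj C) (k : int) (h : Mor C A B) :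
  Mor C A B := if odd `|k|%N then - h else h.

(* Cone(g) = X[-1] (+) Y, with X[-1]^n = X^(n+1), and differential
   [[d_X, 0], [g eps_X, d_Y]], eps_X taken in the degree of X. *)
Definition cone (C : addCat) (X Y : precomplex C)
  (g : forall n, Mor C (cobj X n) (cobj Y n)) : precomplex C :=
  @Precomplex C (fun n => bip C (cobj X (n + 1)) (cobj Y n))
   (fun n =>
      mcomp (bip_inl _ _) (mcomp (cdiff X (n + 1)) (bip_pl _ _))
    + mcomp (bip_inr _ _) (mcomp (eps_at (n + 1) (g (n + 1))) (bip_pl _ _))
    + mcomp (bip_inr _ _) (mcomp (cdiff Y n) (bip_pr _ _))).

(* Main.v *)
Require Import Defs.
From mathcomp Require Import all_boot all_algebra.
Import GRing.Theory.
Local Open Scope ring_scope.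
Lemma odd_abs1 (n : int) : odd `|(n + 1)%R|%N = ~~ odd `|n|%N.
Proof.
case: n => m.
  by rewrite -PoszD absz_nat addn1 /=.
rewrite NegzE.
case: m => [|m] //.
rewrite -[(m.+2)%N]addn1 PoszD opprD addrNK !abszN !absz_nat /=.
by rewrite addn0 negbK.
Qed.

Section Cat.
Variable C : addCat.
Implicit Types A B D E : Obj C.

Lemma comp0r A B D (g : Mor C B D) : mcomp g (0 : Mor C A B) = 0.
Proof. by have := compBr g (0 : Mor C A B) 0; rewrite subrr => ->; rewrite subrr. Qed.
Lemma comp0l A B D (f : Mor C A B) : mcomp (0 : Mor C B D) f = 0.
Proof. by have := compBl (0 : Mor C B D) 0 f; rewrite subrr => ->; rewrite subrr. Qed.
Lemma compNr A B D (g : Mor C B D) (f : Mor C A B) : mcomp g (- f) = - mcomp g f.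
Proof. by rewrite -sub0r compBr comp0r sub0r. Qed.
Lemma compNl A B D (g : Mor C B D) (f : Mor C A B) : mcomp (- g) f = - mcomp g f.
Proof. by rewrite -sub0r compBl comp0l sub0r. Qed.
Lemma compDr A B D (g : Mor C B D) (f f' : Mor C A B) :
  mcomp g (f + f') = mcomp g f + mcomp g f'.
Proof. by have := compBr g f (- f'); rewrite opprK => ->; rewrite compNr opprK. Qed.
Lemma compDl A B D (g g' : Mor C B D) (f : Mor C A B) :
  mcomp (g + g') f = mcomp g f + mcomp g' f.
Proof. by have := compBl g (- g') f; rewrite opprK => ->; rewrite compNl opprK. Qed.
Lemma compAr A B D E (h : Mor C D E) (g : Mor C B D) (f : Mor C A B) :
  mcomp (mcomp h g) f = mcomp h (mcomp g f).
Proof. by rewrite Defs.compA. Qed.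
Lemma plinl_r A B D (x : Mor C D A) :
  mcomp (bip_pl A B) (mcomp (bip_inl A B) x) = x.
Proof. by rewrite Defs.compA bip_plinl comp1m. Qed.
Lemma prinr_r A B D (x : Mor C D B) :
  mcomp (bip_pr A B) (mcomp (bip_inr A B) x) = x.
Proof. by rewrite Defs.compA bip_prinr comp1m. Qed.
Lemma plinr_r A B D (x : Mor C D B) :
  mcomp (bip_pl A B) (mcomp (bip_inr A B) x) = 0.
Proof. by rewrite Defs.compA bip_plinr comp0l. Qed.
Lemma prinl_r A B D (x : Mor C D A) :
  mcomp (bip_pr A B) (mcomp (bip_inl A B) x) = 0.
Proof. by rewrite Defs.compA bip_prinl comp0l. Qed.

Ltac csimp := rewrite ?(compDl, compDr, compNl, compNr, compBl, compBr, comp0l, comp0r, compAr,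
  plinl_r, prinr_r, plinr_r, prinl_r, bip_plinl, bip_prinr, bip_plinr, bip_prinl, comp1m, compm1,
  addr0, add0r, oppr0, subr0, sub0r).

Lemma bip_decomp A B A' B' (h : Mor C (bip C A B) (bip C A' B')) :
  h = mcomp (bip_inl _ _) (mcomp (mcomp (bip_pl _ _) (mcomp h (bip_inl _ _))) (bip_pl _ _))
    + mcomp (bip_inr _ _) (mcomp (mcomp (bip_pr _ _) (mcomp h (bip_inl _ _))) (bip_pl _ _))
    + (mcomp (bip_inl _ _) (mcomp (mcomp (bip_pl _ _) (mcomp h (bip_inr _ _))) (bip_pr _ _))
    + mcomp (bip_inr _ _) (mcomp (mcomp (bip_pr _ _) (mcomp h (bip_inr _ _))) (bip_pr _ _))).
Proof.
have {1}-> : h = mcomp (idm _) (mcomp h (idm _)) by rewrite comp1m compm1.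
rewrite -{1}(bip_sum A B) -(bip_sum A' B').
by rewrite !compDr !compDl !compAr.
Qed.

Lemma bip_ext A B A' B' (h k : Mor C (bip C A B) (bip C A' B')) :
  mcomp (bip_pl _ _) (mcomp h (bip_inl _ _)) = mcomp (bip_pl _ _) (mcomp k (bip_inl _ _)) ->
  mcomp (bip_pl _ _) (mcomp h (bip_inr _ _)) = mcomp (bip_pl _ _) (mcomp k (bip_inr _ _)) ->
  mcomp (bip_pr _ _) (mcomp h (bip_inl _ _)) = mcomp (bip_pr _ _) (mcomp k (bip_inl _ _)) ->
  mcomp (bip_pr _ _) (mcomp h (bip_inr _ _)) = mcomp (bip_pr _ _) (mcomp k (bip_inr _ _)) ->
  h = k.
Proof.
move=> e1 e2 e3 e4.
rewrite (@bip_decomp _ _ _ _ h) (@bip_decomp _ _ _ _ k).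
by rewrite e1 e2 e3 e4.
Qed.
End Cat.


Ltac csimp := rewrite ?(compDl, compDr, compNl, compNr, compBl, compBr, comp0l, comp0r, compAr,
  plinl_r, prinr_r, plinr_r, prinl_r, bip_plinl, bip_prinr, bip_plinr, bip_prinl, comp1m, compm1,
  addr0, add0r, oppr0, subr0, sub0r, opprK).

Theorem lemma6p1 (C : addCat) (F G : addFunctor C) (b : addInvolution C)
  (f : forall A : Obj C, Mor C (FO F A) (FO G A))
  (f_nat : forall (A B : Obj C) (phi : Mor C A B),
      mcomp (FM G phi) (f A) = mcomp (f B) (FM F phi))
  (dd : forall A B : Obj C, Mor C A B -> Mor C (FO G A) (FO F B))
  (dd_lin : forall (A B : Obj C) (phi psi : Mor C A B),
      dd A B (phi - psi) = dd A B phi - dd A B psi)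
  (dd_G : forall (A B : Obj C) (phi : Mor C A B),
      FM G (phi - bar b phi) = mcomp (f B) (dd A B phi))
  (dd_F : forall (A B : Obj C) (phi : Mor C A B),
      FM F (phi - bar b phi) = mcomp (dd A B phi) (f A))
  (dd_comp1 : forall (A B D : Obj C) (phi : Mor C A B) (psi : Mor C B D),
      dd A D (mcomp psi phi)
      = mcomp (dd B D psi) (FM G phi) + mcomp (FM F (bar b psi)) (dd A B phi))
  (dd_comp2 : forall (A B D : Obj C) (phi : Mor C A B) (psi : Mor C B D),
      dd A D (mcomp psi phi)
      = mcomp (dd B D psi) (FM G (bar b phi)) + mcomp (FM F psi) (dd A B phi))
  (X : precomplex C) (HX : is_complex X) :
  complex_iso
    (cone (X := Fcomplex F X) (Y := Fcomplex G X) (fun n => f (cobj X n)))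
    (cone (X := Fcomplex F (barcomplex b X)) (Y := Fcomplex G (barcomplex b X))
          (fun n => f (cobj X n))).
Proof.
pose a n : Mor C (FO G (cobj X n)) (FO F (cobj X (n + 1))) :=
  - eps_at n (dd _ _ (cdiff X n)).
exists (fun n => idm _ + mcomp (bip_inl _ _) (mcomp (a n) (bip_pr _ _))).
exists (fun n => idm _ - mcomp (bip_inl _ _) (mcomp (a n) (bip_pr _ _))).
have hF : forall A B (phi : Mor C A B), FM F (bar b phi) = FM F phi - mcomp (dd A B phi) (f A).
  by move=> A B phi; rewrite -dd_F FM_add opprB addrC subrK.
have hG : forall A B (phi : Mor C A B), FM G (bar b phi) = FM G phi - mcomp (f B) (dd A B phi).
  by move=> A B phi; rewrite -dd_G FM_add opprB addrC subrK.
have hc : forall n, mcomp (dd _ _ (cdiff X (n + 1))) (FM G (cdiff X n))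
   + mcomp (FM F (cdiff X (n + 1))) (dd _ _ (cdiff X n))
   - mcomp (dd _ _ (cdiff X (n + 1))) (mcomp (f _) (dd _ _ (cdiff X n))) = 0.
  move=> n; have := dd_comp1 _ _ _ (cdiff X n) (cdiff X (n + 1)).
  rewrite HX hF compBl -Defs.compA addrA => <-.
  by have := dd_lin _ _ (0 : Mor C (cobj X n) (cobj X (n + 1 + 1))) 0; rewrite subrr => ->; rewrite subrr.
rewrite /is_chain_map /cone /Fcomplex /barcomplex /=.
have hc' : forall n, mcomp (dd _ _ (cdiff X (n + 1))) (FM G (cdiff X n))
   = mcomp (dd _ _ (cdiff X (n + 1))) (mcomp (f _) (dd _ _ (cdiff X n)))
     - mcomp (FM F (cdiff X (n + 1))) (dd _ _ (cdiff X n)).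
  by move=> n; apply/eqP; rewrite -subr_eq0 opprB addrA hc.
split=> n; apply: bip_ext; csimp.
all: rewrite /a /eps_at ?odd_abs1; case: (odd `|n|%N); rewrite /= ?hF ?hG ?hc'; csimp; rewrite ?hc'; csimp.
all: try by rewrite ?(addrA, opprB, opprD, opprK, addrK, subrK, addKr, addNKr, addrNK, subrr, addNr, addrN, add0r, addr0).
all: try by rewrite addrC ?(addrA, opprB, opprD, opprK, addrK, subrK, addKr, addNKr, addrNK, subrr, addNr, addrN, add0r, addr0).
all: try by rewrite addrC.
all: try by rewrite addrC subrK.
all: try by rewrite addrCA subrr addr0.
all: try by rewrite opprB addrC subrK.
all: try by rewrite (addrC (- _)).
all: try by rewrite (addrAC (mcomp _ _)) subrr add0r.
Qed.
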